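(* Let $n\in\mathbb{N}=\{1,2,\dots\}$, $0\le i\le n-1$, and $\alpha,\beta\in\mathbb{R}$ such that the Jacobi functions below are defined. Then on $(-1,1)$ $$\int\frac{t^i}{i!}p_n^{(\alpha,\beta)}(t)\,dt=-\sum_{k=0}^i\frac{2^{k+1}\Gamma(n+\alpha+\beta+1)}{\Gamma(n+k+\alpha+\beta+2)}\frac{t^{i-k}}{(i-k)!}p_{n-1-k}^{(\alpha+1+k,\beta+1+k)}(t),$$ i.e. the right-hand side is an antiderivative of $t\mapsto\frac{t^i}{i!}p_n^{(\alpha,\beta)}(t)$.
   Context: The Jacobi polynomials are $P_n^{(\alpha,\beta)}(t)=\sum_{j=0}^n\frac{1}{2^n}\binom{n+\alpha}{n-j}\binom{n+\beta}{j}(t-1)^j(t+1)^{n-j}$. The Jacobi functions on $(-1,1)$ are $$p_n^{(\alpha,\beta)}(t)=\frac{(2n+\alpha+\beta+1)\Gamma(n+\alpha+\beta+1)\,n!}{2^{\alpha+\beta+1}\Gamma(n+\alpha+1)\Gamma(n+\beta+1)}(1-t)^{\alpha}(1+t)^{\beta}P_n^{(\alpha,\beta)}(t)=\frac{(-1)^n(2n+\alpha+\beta+1)\Gamma(n+\alpha+\beta+1)}{2^{n+\alpha+\beta+1}\Gamma(n+\alpha+1)\Gamma(n+\beta+1)}\frac{d^n}{dt^n}\big((1-t)^{n+\alpha}(1+t)^{n+\beta}\big).$$ *)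

(* Defs.v *)
From Stdlib Require Import Reals Factorial.
From Coquelicot Require Import Coquelicot.
Open Scope R_scope.

(* Euler's Gamma function on the reals, via the Gauss (Euler) limit formula
   Gamma(x) = lim_{m -> oo} m! m^x / (x (x+1) ... (x+m)),
   valid for every real x that is not a non-positive integer. *)
Fixpoint rising_prod (x : R) (m : nat) : R :=
  match m with
  | O => x
  | S k => rising_prod x k * (x + INR (S k))
  end.

Definition Gamma (x : R) : R :=
  real (Lim_seq (fun m => INR (fact m) * Rpower (INR m) x / rising_prod x m)).

Definition Gamma_defined (x : R) : Prop := forall m : nat, x <> - INR m.

Fixpoint binomR (r : R) (k : nat) : R :=
  match k with
  | O => 1
  | S j => binomR r j * (r - INR j) / INR (S j)
  end.

Definition jacobiP (n : nat) (a b t : R) : R :=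
  sum_f_R0 (fun j => / 2 ^ n * binomR (INR n + a) (n - j) * binomR (INR n + b) j
                      * (t - 1) ^ j * (t + 1) ^ (n - j)) n.

Definition jacobi_fun (n : nat) (a b t : R) : R :=
  (2 * INR n + a + b + 1) * Gamma (INR n + a + b + 1) * INR (fact n)
  / (Rpower 2 (a + b + 1) * Gamma (INR n + a + 1) * Gamma (INR n + b + 1))
  * Rpower (1 - t) a * Rpower (1 + t) b * jacobiP n a b t.

(* Main.v *)
Require Import Defs.
From Stdlib Require Import Reals Factorial Lra Lia.
From Coquelicot Require Import Coquelicot.
Open Scope R_scope.

Lemma limsup_mult (u v : nat -> R) (l : Rbar) :
  is_lim_seq v 1 -> is_LimSup_seq u l -> is_LimSup_seq (fun n => u n * v n) l.
Proof.
  intros Hv Hu. apply is_lim_seq_spec in Hv.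
  assert (Hd : forall d, 0 < d -> exists N, forall n, (N <= n)%nat -> 1 - d < v n < 1 + d).
  { intros d Hd. destruct (Hv (mkposreal d Hd)) as [N HN]. exists N. intros n Hn.
    specialize (HN n Hn). simpl in HN. apply Rabs_def2 in HN. lra. }
  destruct l as [l| |]; simpl in *.
  - intros eps. destruct (Hu (mkposreal (eps/2) ltac:(destruct eps; simpl; lra))) as [H1 H2].
    simpl in H1, H2.
    set (d := Rmin (1/2) (eps / 2 / (Rabs (l - eps/2) + Rabs (l + eps/2) + 1))).
    assert (Hdp : 0 < d).
    { unfold d. apply Rmin_glb_lt. lra. destruct eps as [e He]; simpl.
      apply Rdiv_lt_0_compat. lra. pose proof (Rabs_pos (l - e/2)); pose proof (Rabs_pos (l+e/2)); lra. }
    assert (Hd1 : d <= 1/2) by apply Rmin_l.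
    assert (Hd2 : d * (Rabs (l - eps/2) + Rabs (l + eps/2) + 1) <= eps/2).
    { unfold d. pose proof (Rabs_pos (l - eps/2)); pose proof (Rabs_pos (l+eps/2)).
      apply Rle_trans with (eps / 2 / (Rabs (l - eps/2) + Rabs (l + eps/2) + 1) * (Rabs (l - eps/2) + Rabs (l + eps/2) + 1)).
      apply Rmult_le_compat_r. lra. apply Rmin_r. right. field. lra. }
    destruct (Hd d Hdp) as [Nv HNv].
    pose proof (Rabs_pos (l - eps/2)); pose proof (Rabs_pos (l+eps/2)).
    split.
    + intros N. destruct (H1 (max N Nv)) as [n [Hn Hun]]. exists n. split. lia.
      specialize (HNv n ltac:(lia)).
      assert (l - eps/2 - Rabs (l - eps/2) * d <= (l - eps/2) * v n).
      { replace ((l - eps/2) * v n) with ((l-eps/2) + (l-eps/2)*(v n - 1)) by ring.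
        assert (Rabs ((l-eps/2)*(v n - 1)) <= Rabs (l-eps/2) * d).
        { rewrite Rabs_mult. apply Rmult_le_compat_l. apply Rabs_pos.
          apply Rabs_le. lra. }
        apply Rabs_le_between in H3. lra. }
      assert ((l - eps/2) * v n < u n * v n) by (apply Rmult_lt_compat_r; lra).
      nra.
    + destruct H2 as [N2 H2]. exists (max N2 Nv). intros n Hn.
      specialize (HNv n ltac:(lia)). specialize (H2 n ltac:(lia)).
      assert ((l + eps/2) * v n <= l + eps/2 + Rabs (l + eps/2) * d).
      { replace ((l + eps/2) * v n) with ((l+eps/2) + (l+eps/2)*(v n - 1)) by ring.
        assert (Rabs ((l+eps/2)*(v n - 1)) <= Rabs (l+eps/2) * d).
        { rewrite Rabs_mult. apply Rmult_le_compat_l. apply Rabs_pos.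
          apply Rabs_le. lra. }
        apply Rabs_le_between in H3. lra. }
      assert (u n * v n < (l + eps/2) * v n) by (apply Rmult_lt_compat_r; lra).
      nra.
  - intros M N. destruct (Hd (1/2) ltac:(lra)) as [Nv HNv].
    destruct (Hu (2 * Rabs M + 1) (max N Nv)) as [n [Hn Hun]].
    exists n. split. lia. specialize (HNv n ltac:(lia)).
    pose proof (Rabs_pos M). pose proof (Rle_abs M).
    assert ((2 * Rabs M + 1) * v n < u n * v n) by (apply Rmult_lt_compat_r; lra).
    nra.
  - intros M. destruct (Hd (1/2) ltac:(lra)) as [Nv HNv].
    destruct (Hu (- 2 * Rabs M - 2)) as [N HN]. exists (max N Nv). intros n Hn.
    specialize (HNv n ltac:(lia)). specialize (HN n ltac:(lia)).
    pose proof (Rabs_pos M). pose proof (Rle_abs M). pose proof (Rle_abs (-M)). rewrite Rabs_Ropp in *.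
    assert (u n * v n < (- 2 * Rabs M - 2) * v n) by (apply Rmult_lt_compat_r; lra).
    nra.
Qed.

Lemma Lim_seq_mult1 (u v : nat -> R) :
  is_lim_seq v 1 -> Lim_seq (fun n => u n * v n) = Lim_seq u.
Proof.
  intros Hv. unfold Lim_seq.
  assert (E1 : LimSup_seq (fun n => u n * v n) = LimSup_seq u).
  { apply is_LimSup_seq_unique. apply limsup_mult; auto.
    unfold LimSup_seq. destruct (ex_LimSup_seq u); simpl; auto. }
  assert (E2 : LimInf_seq (fun n => u n * v n) = LimInf_seq u).
  { apply is_LimInf_seq_unique. apply is_LimSup_opp_LimInf_seq.
    apply is_LimSup_seq_ext with (fun n => - u n * v n).
    intros n; simpl; ring.
    apply limsup_mult; [exact Hv|].
    apply is_LimSup_opp_LimInf_seq.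
    unfold LimInf_seq. destruct (ex_LimInf_seq u); simpl; auto. }
  rewrite E1, E2. reflexivity.
Qed.

Lemma rising_S x m : rising_prod x (S m) = x * rising_prod (x+1) m.
Proof.
  induction m.
  - simpl. ring.
  - change (rising_prod x (S (S m))) with (rising_prod x (S m) * (x + INR (S (S m)))).
    rewrite IHm. change (rising_prod (x+1) (S m)) with (rising_prod (x+1) m * (x + 1 + INR (S m))).
    rewrite !S_INR. ring.
Qed.

Lemma Gd_nz x k : Gamma_defined x -> x + INR k <> 0.
Proof. intros H E. apply (H k). lra. Qed.

Lemma rising_nz x m : Gamma_defined x -> rising_prod x m <> 0.
Proof.
  intros H. induction m.
  - simpl. pose proof (Gd_nz x 0 H). simpl in H0. lra.
  - change (rising_prod x (S m)) with (rising_prod x m * (x + INR (S m))).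
    apply Rmult_integral_contrapositive. split; auto. apply Gd_nz; auto.
Qed.

Lemma Gd_S x : Gamma_defined x -> Gamma_defined (x+1).
Proof. intros H m E. apply (H (S m)). rewrite S_INR. lra. Qed.

Lemma lim_r : is_lim_seq (fun m => INR m / INR (S m)) 1.
Proof.
  apply is_lim_seq_ext with (fun m => 1 - / INR (S m)).
  { intros m. rewrite S_INR. field. pose proof (pos_INR m). lra. }
  replace (Finite 1) with (Rbar_minus 1 0) by (simpl; f_equal; ring).
  apply is_lim_seq_minus'. apply is_lim_seq_const.
  replace (Finite 0) with (Rbar_inv p_infty) by reflexivity.
  apply is_lim_seq_inv. 2: discriminate.
  apply (is_lim_seq_incr_1 INR). apply is_lim_seq_INR.
Qed.

Lemma lim_v x : is_lim_seq (fun m => Rpower (INR m) (x+1) / (INR (S m) * Rpower (INR (S m)) x)) 1.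
Proof.
  apply is_lim_seq_ext_loc with (fun m => INR m / INR (S m) * exp (x * ln (INR m / INR (S m)))).
  { exists 1%nat. intros m Hm. assert (0 < INR m) by (apply lt_0_INR; lia).
    assert (0 < INR (S m)) by (apply lt_0_INR; lia).
    unfold Rpower. rewrite ln_div by auto.
    replace ((x+1) * ln (INR m)) with (x * ln (INR m) + ln (INR m)) by ring.
    rewrite exp_plus, exp_ln by auto.
    replace (x * (ln (INR m) - ln (INR (S m)))) with (x * ln (INR m) + - (x * ln (INR (S m)))) by ring.
    rewrite exp_plus, exp_Ropp. field. pose proof (exp_pos (x * ln (INR (S m)))). split; lra. }
  replace (Finite 1) with (Rbar_mult 1 1) by (simpl; f_equal; ring).
  apply is_lim_seq_mult'. apply lim_r.
  assert (L : is_lim_seq (fun m => exp (x * ln (INR m / INR (S m)))) (exp (x * ln 1))).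
  { unfold is_lim_seq.
  apply (filterlim_comp _ _ _ (fun m => x * ln (INR m / INR (S m))) exp _ (locally (x * ln 1))).
  2: apply continuous_exp.
  apply (filterlim_comp _ _ _ (fun m => ln (INR m / INR (S m))) (fun y => x * y) _ (locally (ln 1))).
  2: apply (continuous_mult (fun _ => x) (fun y => y)); [apply continuous_const | apply continuous_id].
  apply (filterlim_comp _ _ _ (fun m => INR m / INR (S m)) ln _ (locally 1)).
  apply lim_r. apply continuous_ln. lra. }
  rewrite ln_1, Rmult_0_r, exp_0 in L. exact L.
Qed.

Lemma real_mult (x : R) (L : Rbar) : real (Rbar_mult x L) = x * real L.
Proof.
  destruct L as [l| |]; simpl; try ring;
  unfold Rbar_mult, Rbar_mult'; destruct (Rle_dec 0 x) as [h|h]; try (destruct (Rle_lt_or_eq_dec 0 x h));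
  simpl; ring.
Qed.

Lemma Gamma_succ x : Gamma_defined x -> Gamma (x+1) = x * Gamma x.
Proof.
  intros H. unfold Gamma.
  assert (Hx : x <> 0) by (pose proof (Gd_nz x 0 H); simpl in H0; lra).
  rewrite (Lim_seq_ext_loc _ (fun m => x * ((fun k => INR (fact k) * Rpower (INR k) x / rising_prod x k) (S m)
       * (Rpower (INR m) (x+1) / (INR (S m) * Rpower (INR (S m)) x))))).
  2: { exists 1%nat. intros m Hm. simpl (fun k => _) .
       rewrite rising_S. rewrite fact_simpl, mult_INR.
       pose proof (rising_nz (x+1) m (Gd_S x H)).
       assert (0 < INR (S m)) by (apply lt_0_INR; lia).
       assert (0 < Rpower (INR (S m)) x) by (unfold Rpower; apply exp_pos).
       field. repeat split; lra. }
  rewrite Lim_seq_scal_l, Lim_seq_mult1 by apply lim_v.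
  rewrite (Lim_seq_incr_1 (fun k => INR (fact k) * Rpower (INR k) x / rising_prod x k)).
  apply real_mult.
Qed.
Lemma is_derive_sum (f : nat -> R -> R) (df : nat -> R) n t :
  (forall j, (j <= n)%nat -> is_derive (f j) t (df j)) ->
  is_derive (fun s => sum_f_R0 (fun j => f j s) n) t (sum_f_R0 df n).
Proof.
  induction n; intros H.
  - simpl. apply H. lia.
  - simpl. apply (is_derive_plus (fun s => sum_f_R0 (fun j => f j s) n) (f (S n))).
    apply IHn. intros; apply H; lia. apply H; lia.
Qed.

Lemma term_id (p j : nat) (a b t : R) : (j <= p)%nat ->
  let ra := INR p + (a+1) in let rb := INR p + (b+1) in
  binomR ra (p - j) * binomR rb j *
   ((-(a+1)*(1+t) + (b+1)*(1-t)) * ((t-1)^j * (t+1)^(p-j))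
    + (1-t)*(1+t)*(INR j * (t-1)^(pred j) * (t+1)^(p-j) + (t-1)^j * (INR (p-j) * (t+1)^(pred (p-j)))))
  = - (INR (S p - j) * (binomR ra (S p - j) * binomR rb j) * ((t-1)^j * (t+1)^(S p - j))
       + INR (S j) * (binomR ra (S p - S j) * binomR rb (S j)) * ((t-1)^(S j) * (t+1)^(S p - S j))).
Proof.
  intros Hj ra rb.
  replace (S p - j)%nat with (S (p - j)) by lia.
  replace (S p - S j)%nat with (p - j)%nat by lia.
  change (binomR ra (S (p-j))) with (binomR ra (p-j) * (ra - INR (p-j)) / INR (S (p-j))).
  change (binomR rb (S j)) with (binomR rb j * (rb - INR j) / INR (S j)).
  unfold ra, rb. rewrite minus_INR by lia.
  assert (0 < INR (S (p-j))) by (apply lt_0_INR; lia).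
  assert (0 < INR (S j)) by (apply lt_0_INR; lia).
  set (B1 := binomR (INR p + (a + 1)) (p - j)). set (B2 := binomR (INR p + (b + 1)) j).
  assert (Hp : p = (j + (p - j))%nat) by lia.
  set (q := (p - j)%nat) in *. clearbody q B1 B2. subst p.
  rewrite plus_INR.
  pose proof (pos_INR j); pose proof (pos_INR q).
  destruct j; destruct q; simpl pred; rewrite ?Nat.add_0_r, ?Nat.add_0_l in *; rewrite ?S_INR in *; simpl pow in *;
  try rewrite INR_0 in *; field; lra.
Qed.

Lemma sum_scal (c : R) (f : nat -> R) n : sum_f_R0 (fun j => c * f j) n = c * sum_f_R0 f n.
Proof. induction n; simpl; [ring| rewrite IHn; ring]. Qed.

Lemma sum_add (f g : nat -> R) n : sum_f_R0 (fun j => f j + g j) n = sum_f_R0 f n + sum_f_R0 g n.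
Proof. induction n; simpl; [ring| rewrite IHn; ring]. Qed.

Lemma sum_ext (f g : nat -> R) n : (forall j, (j <= n)%nat -> f j = g j) -> sum_f_R0 f n = sum_f_R0 g n.
Proof. intros H. induction n; simpl. apply H; lia. rewrite IHn by (intros; apply H; lia). rewrite H by lia. auto. Qed.

Lemma sum_shift0 (f : nat -> R) n : sum_f_R0 f (S n) = f 0%nat + sum_f_R0 (fun j => f (S j)) n.
Proof. induction n. simpl. ring. change (sum_f_R0 f (S (S n))) with (sum_f_R0 f (S n) + f (S (S n))).
  rewrite IHn. simpl. ring. Qed.

Lemma shift_identity (Z : nat -> R) p :
  sum_f_R0 (fun j => INR (S p - j) * Z j + INR (S j) * Z (S j)) p = INR (S p) * sum_f_R0 Z (S p).
Proof.
  rewrite sum_add.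
  assert (E1 : sum_f_R0 (fun j => INR (S p - j) * Z j) p = sum_f_R0 (fun j => INR (S p - j) * Z j) (S p)).
  { simpl (sum_f_R0 _ (S p)). rewrite Nat.sub_diag. simpl INR. ring. }
  assert (E2 : sum_f_R0 (fun j => INR (S j) * Z (S j)) p = sum_f_R0 (fun j => INR j * Z j) (S p)).
  { rewrite sum_shift0. simpl INR. ring. }
  rewrite E1, E2, <- sum_add, <- sum_scal. apply sum_ext. intros j Hj.
  rewrite minus_INR by lia. ring.
Qed.

Lemma deriv_jacobiP p a b t : is_derive (fun s => jacobiP p a b s) t
  (sum_f_R0 (fun j => / 2 ^ p * binomR (INR p + a) (p - j) * binomR (INR p + b) j *
     (INR j * (t-1)^(pred j) * (t+1)^(p-j) + (t-1)^j * (INR (p-j) * (t+1)^(pred (p-j))))) p).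
Proof.
  unfold jacobiP.
  apply (is_derive_sum (fun j s => / 2 ^ p * binomR (INR p + a) (p - j) * binomR (INR p + b) j
                      * (s - 1) ^ j * (s + 1) ^ (p - j))).
  intros j Hj. auto_derive. auto. change R in t. unfold Rminus. ring.
Qed.

Lemma poly_id p a b t :
  (-(a+1)*(1+t) + (b+1)*(1-t)) * jacobiP p (a+1) (b+1) t
  + (1-t)*(1+t) * sum_f_R0 (fun j => / 2 ^ p * binomR (INR p + (a+1)) (p - j) * binomR (INR p + (b+1)) j *
     (INR j * (t-1)^(pred j) * (t+1)^(p-j) + (t-1)^j * (INR (p-j) * (t+1)^(pred (p-j))))) p
  = -2 * INR (S p) * jacobiP (S p) a b t.
Proof.
  set (ra := INR p + (a+1)). set (rb := INR p + (b+1)).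
  set (Z := fun j => binomR ra (S p - j) * binomR rb j * ((t-1)^j * (t+1)^(S p - j))).
  transitivity (- / 2 ^ p * (INR (S p) * sum_f_R0 Z (S p))).
  - rewrite <- shift_identity. unfold jacobiP. fold ra rb.
    rewrite <- (sum_scal (- (a + 1) * (1 + t) + (b + 1) * (1 - t))), <- (sum_scal ((1-t)*(1+t))), <- sum_add, <- sum_scal. apply sum_ext. intros j Hj.
    pose proof (term_id p j a b t Hj) as T. cbv zeta in T. fold ra rb in T.
    unfold Z. transitivity (/2^p * (binomR ra (p - j) * binomR rb j *
   ((-(a+1)*(1+t) + (b+1)*(1-t)) * ((t-1)^j * (t+1)^(p-j))
    + (1-t)*(1+t)*(INR j * (t-1)^(pred j) * (t+1)^(p-j) + (t-1)^j * (INR (p-j) * (t+1)^(pred (p-j))))))).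
    ring. rewrite T. ring.
  - unfold jacobiP. rewrite <- !sum_scal. apply sum_ext. intros j Hj. unfold Z.
    replace (INR (S p) + a) with ra by (unfold ra; rewrite S_INR; ring).
    replace (INR (S p) + b) with rb by (unfold rb; rewrite S_INR; ring).
    simpl pow. field. apply pow_nonzero. lra.
Qed.

Lemma Rp1 c x : 0 < x -> exp ((c+1) * ln x) = exp (c * ln x) * x.
Proof. intros. replace ((c+1) * ln x) with (c * ln x + ln x) by ring. rewrite exp_plus, exp_ln; auto. Qed.

Lemma is_derive_eq (f : R -> R) x l l' : is_derive f x l -> l = l' -> is_derive f x l'.
Proof. intros H ->; auto. Qed.

Lemma is_derive_mult_R (f g : R -> R) x df dg : is_derive f x df -> is_derive g x dg ->
  is_derive (fun s => f s * g s) x (df * g x + f x * dg).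
Proof. intros H1 H2. apply (is_derive_mult f g x df dg H1 H2). intros; apply Rmult_comm. Qed.

Lemma KL p a b t : -1 < t < 1 ->
  is_derive (fun s => Rpower (1-s) (a+1) * Rpower (1+s) (b+1) * jacobiP p (a+1) (b+1) s) t
    (-2 * INR (S p) * (Rpower (1-t) a * Rpower (1+t) b * jacobiP (S p) a b t)).
Proof.
  intros Ht.
  assert (HW : is_derive (fun s => Rpower (1-s) (a+1) * Rpower (1+s) (b+1)) t
     (Rpower (1-t) a * Rpower (1+t) b * (-(a+1)*(1+t) + (b+1)*(1-t)))).
  { unfold Rpower. auto_derive. split; [lra|split; [lra|auto]].
    change R in t. rewrite !Rp1 by lra.
    replace (1 + - t) with (1 - t) by ring. field. lra. }
  pose proof (is_derive_mult_R _ _ t _ _ HW (deriv_jacobiP p (a+1) (b+1) t)) as H.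
  eapply is_derive_eq. exact H.
  replace (-2 * INR (S p) * (Rpower (1-t) a * Rpower (1+t) b * jacobiP (S p) a b t))
    with (Rpower (1-t) a * Rpower (1+t) b * (-2 * INR (S p) * jacobiP (S p) a b t)) by ring.
  rewrite <- poly_id.
  unfold Rpower. rewrite !Rp1 by lra. match goal with |- ?A = ?B => change (@eq R A B) end. ring.
Qed.

Lemma Gd_plus x j : Gamma_defined x -> Gamma_defined (x + INR j).
Proof. intros H m E. apply (H (m + j)%nat). rewrite plus_INR. lra. Qed.

Lemma Gamma_nz_shift x j : Gamma_defined x -> Gamma x <> 0 -> Gamma (x + INR j) <> 0.
Proof.
  intros H G. induction j.
  - simpl. rewrite Rplus_0_r. auto.
  - rewrite S_INR. replace (x + (INR j + 1)) with ((x + INR j) + 1) by ring.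
    rewrite Gamma_succ by (apply Gd_plus; auto).
    apply Rmult_integral_contrapositive. split; auto. apply Gd_nz; auto.
Qed.

Definition Qf (n : nat) (a b : R) (k : nat) (s : R) :=
  Rpower (1-s) (a + INR k) * Rpower (1+s) (b + INR k) * jacobiP (n - k) (a + INR k) (b + INR k) s.

Definition Cst (n : nat) (a b : R) :=
  (2 * INR n + a + b + 1) * Gamma (INR n + a + b + 1)
  / (Rpower 2 (a + b + 1) * Gamma (INR n + a + 1) * Gamma (INR n + b + 1)).

Lemma Q_deriv n a b k t : (k < n)%nat -> -1 < t < 1 ->
  is_derive (Qf n a b (S k)) t (-2 * INR (n - k) * Qf n a b k t).
Proof.
  intros Hk Ht. pose proof (KL (n - S k) (a + INR k) (b + INR k) t Ht) as H.
  replace (S (n - S k)) with (n - k)%nat in H by lia.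
  eapply is_derive_ext. 2: eapply is_derive_eq; [exact H|].
  - intros s. unfold Qf. rewrite S_INR.
    replace (a + (INR k + 1)) with (a + INR k + 1) by ring.
    replace (b + (INR k + 1)) with (b + INR k + 1) by ring. reflexivity.
  - unfold Qf. match goal with |- ?A = ?B => change (@eq R A B) end. ring.
Qed.

Lemma F1 n i a b k s : (1 <= n)%nat -> (k <= n - 1)%nat -> Gamma_defined (INR n + a + b + 1) ->
  2 ^ (k + 1) * Gamma (INR n + a + b + 1) / Gamma (INR n + INR k + a + b + 2)
    * (s ^ (i - k) / INR (fact (i - k)))
    * jacobi_fun (n - 1 - k) (a + 1 + INR k) (b + 1 + INR k) s
  = Cst n a b * INR (fact (n - 1 - k)) / 2 ^ (k + 1) * (s ^ (i - k) / INR (fact (i - k)))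
    * Qf n a b (S k) s.
Proof.
  intros Hn Hk HG. unfold jacobi_fun, Qf, Cst.
  assert (Hm : INR (n - 1 - k) = INR n - 1 - INR k) by (rewrite !minus_INR by lia; simpl; ring).
  rewrite Hm.
  replace (n - S k)%nat with (n - 1 - k)%nat by lia.
  rewrite S_INR.
  replace (a + (INR k + 1)) with (a + 1 + INR k) by ring.
  replace (b + (INR k + 1)) with (b + 1 + INR k) by ring.
  replace (INR n - 1 - INR k + (a + 1 + INR k) + (b + 1 + INR k) + 1)
    with (INR n + a + b + 1 + INR (S k)) by (rewrite S_INR; ring).
  replace (INR n + INR k + a + b + 2) with (INR n + a + b + 1 + INR (S k)) by (rewrite S_INR; ring).
  replace (INR n - 1 - INR k + (a + 1 + INR k) + 1) with (INR n + a + 1) by ring.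
  replace (INR n - 1 - INR k + (b + 1 + INR k) + 1) with (INR n + b + 1) by ring.
  replace (2 * (INR n - 1 - INR k) + (a + 1 + INR k) + (b + 1 + INR k) + 1)
    with (2 * INR n + a + b + 1) by ring.
  replace (a + 1 + INR k + (b + 1 + INR k) + 1) with ((a + b + 1) + INR k + INR k + 1 + 1) by ring.
  rewrite !Rpower_plus, Rpower_pow, Rpower_1 by lra.
  destruct (Req_dec (Gamma (INR n + a + b + 1)) 0) as [E|E].
  - rewrite E. unfold Rdiv. ring.
  - assert (G : Gamma (INR n + a + b + 1 + INR (S k)) <> 0) by (apply Gamma_nz_shift; auto).
    unfold Rdiv. rewrite !Rinv_mult.
    set (iR := / Rpower 2 (a + b + 1)).
    set (i1 := / Gamma (INR n + a + 1)). set (i2 := / Gamma (INR n + b + 1)).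
    rewrite pow_add. field. repeat split; auto; try apply INR_fact_neq_0; try (apply pow_nonzero; lra); unfold Rpower; apply Rgt_not_eq, exp_pos.
Qed.

Lemma is_derive_opp_R (f : R -> R) x df : is_derive f x df -> is_derive (fun s => - f s) x (- df).
Proof. intros H. apply (is_derive_opp f x df H). Qed.

Definition Uf n i a b k t := INR (fact (n - k)) / 2 ^ k * (t ^ (i - k) / INR (fact (i - k))) * Qf n a b k t.
Definition Wf n i a b k t := INR (fact (n - 1 - k)) / 2 ^ (k + 1)
  * (INR (i - k) * t ^ (pred (i - k)) / INR (fact (i - k))) * Qf n a b (S k) t.

Lemma term_deriv n i a b k t : (k < n)%nat -> -1 < t < 1 ->
  is_derive (fun s => Cst n a b * INR (fact (n - 1 - k)) / 2 ^ (k + 1) * (s ^ (i - k) / INR (fact (i - k)))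
    * Qf n a b (S k) s) t (Cst n a b * (Wf n i a b k t - Uf n i a b k t)).
Proof.
  intros Hk Ht.
  set (c := Cst n a b * INR (fact (n - 1 - k)) / 2 ^ (k + 1)).
  assert (Hf : is_derive (fun s => c * (s ^ (i - k) / INR (fact (i - k)))) t
     (c * (INR (i - k) * t ^ (pred (i - k)) / INR (fact (i - k))))).
  { auto_derive. auto. change R in t. unfold Rdiv. ring. }
  pose proof (is_derive_mult_R _ _ t _ _ Hf (Q_deriv n a b k t Hk Ht)) as H.
  eapply is_derive_eq. exact H.
  unfold Wf, Uf, c.
  replace (n - k)%nat with (S (n - 1 - k)) by lia.
  rewrite fact_simpl, mult_INR. rewrite S_INR. rewrite pow_add.
  match goal with |- ?A = ?B => change (@eq R A B) end. field. split. apply INR_fact_neq_0. apply pow_nonzero. lra.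
Qed.

Lemma tele (f : nat -> R) n : sum_f_R0 (fun k => f k - f (S k)) n = f 0%nat - f (S n).
Proof. induction n; simpl; [ring| rewrite IHn; ring]. Qed.

Lemma UW_sum n i a b t : (i <= n - 1)%nat ->
  sum_f_R0 (fun k => Uf n i a b k t - Wf n i a b k t) i = Uf n i a b 0 t.
Proof.
  intros Hi.
  assert (HW : forall k, (k < i)%nat -> Wf n i a b k t = Uf n i a b (S k) t).
  { intros k Hk. unfold Wf, Uf.
    replace (i - k)%nat with (S (i - S k)) by lia.
    replace (n - S k)%nat with (n - 1 - k)%nat by lia.
    replace (k + 1)%nat with (S k) by lia.
    simpl pred. rewrite fact_simpl, mult_INR.
    field. split. apply INR_fact_neq_0. split. apply pow_nonzero. lra.
    apply not_0_INR. lia. }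
  assert (HWi : Wf n i a b i t = 0).
  { unfold Wf. rewrite Nat.sub_diag. simpl INR. unfold Rdiv. ring. }
  destruct i.
  - simpl. rewrite HWi. ring.
  - simpl. rewrite HWi. rewrite (sum_ext _ (fun k => Uf n (S i) a b k t - Uf n (S i) a b (S k) t)).
    rewrite tele. ring. intros j Hj. rewrite HW by lia. auto.
Qed.

Theorem lemma4p4 (n i : nat) (a b : R) :
  (1 <= n)%nat -> (i <= n - 1)%nat ->
  Gamma_defined (INR n + a + 1) ->
  Gamma_defined (INR n + b + 1) ->
  Gamma_defined (INR n + a + b + 1) ->
  forall t : R, -1 < t < 1 ->
  is_derive
    (fun s : R =>
       - sum_f_R0 (fun k =>
           2 ^ (k + 1) * Gamma (INR n + a + b + 1)
             / Gamma (INR n + INR k + a + b + 2)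
           * (s ^ (i - k) / INR (fact (i - k)))
           * jacobi_fun (n - 1 - k) (a + 1 + INR k) (b + 1 + INR k) s) i)
    t
    (t ^ i / INR (fact i) * jacobi_fun n a b t).
Proof.
  intros Hn Hi Ha Hb HN t Ht.
  eapply is_derive_eq. apply is_derive_opp_R.
  apply (is_derive_sum _ (fun k => Cst n a b * (Wf n i a b k t - Uf n i a b k t))).
  - intros k Hk. eapply is_derive_ext. 2: apply (term_deriv n i a b k t); [lia|auto].
    intros s. symmetry. apply F1; auto; lia.
  - rewrite sum_scal.
    replace (sum_f_R0 (fun k => Wf n i a b k t - Uf n i a b k t) i)
      with (- sum_f_R0 (fun k => Uf n i a b k t - Wf n i a b k t) i).
    2: { replace (- sum_f_R0 (fun k => Uf n i a b k t - Wf n i a b k t) i)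
           with (-1 * sum_f_R0 (fun k => Uf n i a b k t - Wf n i a b k t) i) by ring.
         rewrite <- (sum_scal (-1)). apply sum_ext. intros; ring. }
    rewrite UW_sum by auto.
    unfold Uf, Qf, Cst, jacobi_fun. rewrite !Nat.sub_0_r. simpl INR. rewrite !Rplus_0_r.
    unfold Rdiv. rewrite pow_O, Rinv_1. match goal with |- ?A = ?B => change (@eq R A B) end. ring.
Qed.
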